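(* Let $\mathcal{L}$ be a finite collection of non-vertical lines in $\mathbb{R}^3$ in general position, and let $C$ be a cycle of $\mathcal{L}$ whose projection $C^*$ is self-crossing. Then there is a cycle $C_0$ formed by a proper subset of the lines of $C$ (so with fewer lines than $C$) such that $C_0^*\subseteq C^*$ and every non-vertical edge of $\pi(C_0)$ is contained in a non-vertical edge of $\pi(C)$. Consequently, every cycle $C$ of $\mathcal{L}$ admits a simple cycle $C_0$ with this property, and any finite set of points on the lines of $\mathcal{L}$ that eliminates every simple cycle of $\mathcal{L}$ eliminates every cycle of $\mathcal{L}$.
   Context: A collection $\mathcal{L}$ of non-vertical lines in $\mathbb{R}^3$ is in general position if no two lines intersect, the $xy$-projections of no two lines are parallel, and the $xy$-projections of no three lines pass through a common point. For $\ell,\ell'\in\mathcal{L}$, write $\ell'\prec\ell$ if the unique vertical line meeting both meets $\ell$ at a higher point than $\ell'$. A $k$-cycle ($k\ge3$) is a cyclic sequence of distinct lines $\ell_1\prec\cdots\prec\ell_k\prec\ell_1$. For each $i$ (indices mod $k$), let $v_i^+\in\ell_i$ and $v_{i+1}^-\in\ell_{i+1}$ be the unique pair of points on these lines lying on a common vertical line; the path of $C$ is $\pi(C)=v_1^-v_1^+v_2^-v_2^+\cdots v_k^-v_k^+v_1^-$, with non-vertical edges $e_i=v_i^-v_i^+\subset\ell_i$. The projection $C^*$ is the $xy$-projection of $\pi(C)$, the closed polygonal path formed by the projected edges $e_i^*$. The cycle $C$ is simple if $C^*$ is non-self-crossing. A finite point set $P$ on the lines eliminates $C$ if some $e_i$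 contains a point of $P$. *)

(* Defs.v *)
From Stdlib Require Import Reals List Arith.
Import ListNotations.
Open Scope R_scope.

Record pt3 := mkpt { px : R; py : R; pz : R }.

Record line := mkline { lb : pt3; ld : pt3 }.

Definition lpt (l : line) (t : R) : pt3 :=
  mkpt (px (lb l) + t * px (ld l)) (py (lb l) + t * py (ld l))
       (pz (lb l) + t * pz (ld l)).

Definition on_line (l : line) (p : pt3) : Prop := exists t : R, p = lpt l t.

Definition nonvertical (l : line) : Prop := px (ld l) <> 0 \/ py (ld l) <> 0.

Definition xy (p : pt3) : R * R := (px p, py p).
Definition on_proj (l : line) (q : R * R) : Prop :=
  exists t : R, xy (lpt l t) = q.

Definition xy_parallel (l1 l2 : line) : Prop :=
  px (ld l1) * py (ld l2) - py (ld l1) * px (ld l2) = 0.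

Definition general_position (n : nat) (L : nat -> line) : Prop :=
  (forall i, (i < n)%nat -> nonvertical (L i)) /\
  (forall i j, (i < n)%nat -> (j < n)%nat -> i <> j ->
     ~ (exists p, on_line (L i) p /\ on_line (L j) p)) /\
  (forall i j, (i < n)%nat -> (j < n)%nat -> i <> j -> ~ xy_parallel (L i) (L j)) /\
  (forall i j k, (i < n)%nat -> (j < n)%nat -> (k < n)%nat ->
     i <> j -> j <> k -> i <> k ->
     ~ (exists q, on_proj (L i) q /\ on_proj (L j) q /\ on_proj (L k) q)).

(* l1 ≺ l2 : the vertical line meeting both meets l2 at a higher point *)
Definition below (l1 l2 : line) : Prop :=
  exists p1 p2, on_line l1 p1 /\ on_line l2 p2 /\
    px p1 = px p2 /\ py p1 = py p2 /\ pz p1 < pz p2.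

(* parameter on l1 of the point of l1 lying vertically over/under l2 *)
Definition meet_param (l1 l2 : line) : R :=
  ((px (lb l2) - px (lb l1)) * py (ld l2) - (py (lb l2) - py (lb l1)) * px (ld l2))
  / (px (ld l1) * py (ld l2) - py (ld l1) * px (ld l2)).

(* A cycle is a list c = [l_1; ...; l_k] of indices of lines of L;
   positions are taken modulo k. *)
Definition cyc (c : list nat) (i : nat) : nat := nth (i mod length c) c 0%nat.
Definition nxt (c : list nat) (i : nat) : nat := S i mod length c.
Definition prv (c : list nat) (i : nat) : nat := (i + length c - 1) mod length c.

Definition is_cycle (n : nat) (L : nat -> line) (c : list nat) : Prop :=
  (3 <= length c)%nat /\ NoDup c /\ (forall x, In x c -> (x < n)%nat) /\
  (forall i, (i < length c)%nat -> below (L (cyc c i)) (L (cyc c (nxt c i)))).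

(* the non-vertical edge e_i = v_i^- v_i^+ of the path pi(C), as a point set *)
Definition edge (L : nat -> line) (c : list nat) (i : nat) (p : pt3) : Prop :=
  let l := L (cyc c i) in
  let tp := meet_param l (L (cyc c (nxt c i))) in
  let tm := meet_param l (L (cyc c (prv c i))) in
  exists t, Rmin tm tp <= t <= Rmax tm tp /\ p = lpt l t.

Definition pedge (L : nat -> line) (c : list nat) (i : nat) (q : R * R) : Prop :=
  exists p, edge L c i p /\ xy p = q.

(* C^* as a point set in the plane (vertical edges project to vertices) *)
Definition proj_cycle (L : nat -> line) (c : list nat) (q : R * R) : Prop :=
  exists i, (i < length c)%nat /\ pedge L c i q.

Definition self_crossing (L : nat -> line) (c : list nat) : Prop :=
  exists i j, (i < length c)%nat /\ (j < length c)%nat /\ i <> j /\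
    j <> nxt c i /\ i <> nxt c j /\
    exists q, pedge L c i q /\ pedge L c j q.

Definition simple_cycle (L : nat -> line) (c : list nat) : Prop :=
  ~ self_crossing L c.

Definition sub_cycle (L : nat -> line) (c0 c : list nat) : Prop :=
  (forall q, proj_cycle L c0 q -> proj_cycle L c q) /\
  (forall i, (i < length c0)%nat -> exists j, (j < length c)%nat /\
     forall p, edge L c0 i p -> edge L c j p).

Definition eliminates (L : nat -> line) (P : list pt3) (c : list nat) : Prop :=
  exists i p, (i < length c)%nat /\ In p P /\ edge L c i p.

(* Main.v *)
Require Import Defs.
From Stdlib Require Import Reals List Arith Lia Lra Classical.
Open Scope R_scope.

Definition seg (l:line) (u v:R) (p:pt3) : Prop :=
  exists t, Rmin u v <= t <= Rmax u v /\ p = lpt l t.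

Lemma seg_sub l u v u' v' p : Rmin u v <= u' <= Rmax u v ->
  Rmin u v <= v' <= Rmax u v -> seg l u' v' p -> seg l u v p.
Proof.
  intros H1 H2 [t [Ht ->]]. exists t; split; [|reflexivity].
  unfold Rmin, Rmax in *; repeat destruct Rle_dec; lra.
Qed.

Lemma in_rng_l u v : Rmin u v <= u <= Rmax u v.
Proof. unfold Rmin, Rmax; repeat destruct Rle_dec; lra. Qed.
Lemma in_rng_r u v : Rmin u v <= v <= Rmax u v.
Proof. unfold Rmin, Rmax; repeat destruct Rle_dec; lra. Qed.

Lemma mp_correct l1 l2 t s : ~ xy_parallel l1 l2 ->
  xy (lpt l1 t) = xy (lpt l2 s) -> t = meet_param l1 l2.
Proof.
  destruct l1 as [[a1 b1 c1] [d1 e1 f1]], l2 as [[a2 b2 c2] [d2 e2 f2]].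
  unfold xy_parallel, xy, lpt, meet_param; simpl; intros Hp H.
  injection H as H1 H2.
  apply (Rmult_eq_reg_r (d1*e2 - e1*d2)); [|exact Hp].
  unfold Rdiv. rewrite Rmult_assoc, Rinv_l by exact Hp. rewrite Rmult_1_r.
  assert (Ha : a2 = a1 + t*d1 - s*d2) by lra.
  assert (Hb : b2 = b1 + t*e1 - s*e2) by lra.
  rewrite Ha, Hb; ring.
Qed.

Section Cyc.
Variable c : list nat.
Hypothesis Hk : length c <> 0%nat.

Lemma cyc_mod x : cyc c (x mod length c) = cyc c x.
Proof. unfold cyc. rewrite Nat.mod_mod; auto. Qed.
Lemma cyc_plus_mod x y : cyc c (x mod length c + y) = cyc c (x + y).
Proof. unfold cyc. rewrite Nat.add_mod_idemp_l; auto. Qed.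
Lemma cyc_S_mod x : cyc c (S (x mod length c)) = cyc c (S x).
Proof. replace (S (x mod length c)) with (x mod length c + 1)%nat by lia.
  replace (S x) with (x + 1)%nat by lia. apply cyc_plus_mod. Qed.
Lemma cyc_addk x : cyc c (x + length c) = cyc c x.
Proof. unfold cyc. replace (x + length c)%nat with (x + 1 * length c)%nat by lia.
  rewrite Nat.mod_add; auto. Qed.
Lemma cyc_nxt x : cyc c (nxt c x) = cyc c (S x).
Proof. unfold nxt. apply cyc_mod. Qed.
Lemma cyc_prv x : cyc c (prv c x) = cyc c (x + (length c - 1)).
Proof. unfold prv. rewrite cyc_mod. f_equal. lia. Qed.

Lemma edge_nf L x p : edge L c x p <->
  seg (L (cyc c x)) (meet_param (L (cyc c x)) (L (cyc c (x + (length c - 1)))))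
      (meet_param (L (cyc c x)) (L (cyc c (S x)))) p.
Proof.
  unfold edge, seg. cbv zeta. rewrite cyc_nxt, cyc_prv. tauto.
Qed.

Lemma edge_mod L x p : edge L c (x mod length c) p <-> edge L c x p.
Proof.
  rewrite !edge_nf, cyc_mod, cyc_plus_mod, cyc_S_mod. tauto.
Qed.
End Cyc.

Lemma sub_from_edges L c0 c :
  (forall i, (i < length c0)%nat -> exists j, (j < length c)%nat /\
     forall p, edge L c0 i p -> edge L c j p) -> sub_cycle L c0 c.
Proof.
  intros H; split; auto.
  intros q [i [Hi [p [Hp Hq]]]]. destruct (H i Hi) as [j [Hj Hs]].
  exists j; split; auto. exists p; auto.
Qed.

Lemma sub_trans L c1 c2 c3 : sub_cycle L c1 c2 -> sub_cycle L c2 c3 -> sub_cycle L c1 c3.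
Proof.
  intros [A1 B1] [A2 B2]; split; auto.
  intros i Hi. destruct (B1 i Hi) as [j [Hj Hs]]. destruct (B2 j Hj) as [m [Hm Hs']].
  exists m; split; auto.
Qed.

Lemma sub_refl L c : sub_cycle L c c.
Proof. split; auto. intros i Hi; exists i; auto. Qed.

Lemma mod2 x k : (k <> 0)%nat -> (x < 2*k)%nat ->
  ((x < k)%nat /\ x mod k = x) \/ ((k <= x)%nat /\ x mod k = (x - k)%nat).
Proof.
  intros Hk Hx. destruct (Nat.lt_ge_cases x k).
  - left; split; auto; apply Nat.mod_small; auto.
  - right; split; auto.
    replace x with ((x - k) + 1*k)%nat at 1 by lia.
    rewrite Nat.mod_add by auto. apply Nat.mod_small; lia.
Qed.

Lemma arc_d i j k : (i < k)%nat -> (j < k)%nat -> i <> j ->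
  j <> (S i mod k)%nat -> i <> (S j mod k)%nat ->
  exists d, (2 <= d)%nat /\ (d + 2 <= k)%nat /\ ((i + d) mod k)%nat = j.
Proof.
  intros Hi Hj Hij H1 H2.
  assert (Hk : k <> 0%nat) by lia.
  destruct (mod2 (S i) k Hk ltac:(lia)) as [[A B]|[A B]]; rewrite B in H1;
  destruct (mod2 (S j) k Hk ltac:(lia)) as [[C D]|[C D]]; rewrite D in H2.
  all: destruct (Nat.lt_ge_cases i j).
  all: try (exists (j - i)%nat; split; [lia|split;[lia|]];
            replace (i + (j - i))%nat with j by lia; apply Nat.mod_small; lia).
  all: exists (j + k - i)%nat; split; [lia|split;[lia|]];
       replace (i + (j + k - i))%nat with (j + 1*k)%nat by lia;
       rewrite Nat.mod_add by auto; apply Nat.mod_small; lia.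
Qed.

Lemma cyc_in c x : length c <> 0%nat -> In (cyc c x) c.
Proof. intros Hk. unfold cyc. apply nth_In. apply Nat.mod_upper_bound; auto. Qed.

Lemma arc n L c i j q : general_position n L -> is_cycle n L c ->
  (i < length c)%nat -> (j < length c)%nat -> i <> j ->
  j <> nxt c i -> i <> nxt c j -> pedge L c i q -> pedge L c j q ->
  below (L (cyc c j)) (L (cyc c i)) ->
  exists c0, is_cycle n L c0 /\ incl c0 c /\ (length c0 < length c)%nat /\
                sub_cycle L c0 c.
Proof.
  intros [GP1 [GP2 [GP3 GP4]]] [Hk3 [Hnd [Hlt Hbel]]] Hi Hj Hij Hn1 Hn2 Pi Pj Hb.
  set (k := length c) in *.
  assert (Hk : k <> 0%nat) by lia.
  destruct (arc_d i j k Hi Hj Hij Hn1 Hn2) as [d [Hd2 [Hdk Hd]]].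
  set (f := fun m => cyc c (i + m)).
  set (c0 := map f (seq 0 (S d))).
  assert (Hlen : length c0 = S d) by (unfold c0; rewrite length_map, length_seq; auto).
  assert (Hc0 : forall y, cyc c0 y = cyc c (i + y mod S d)).
  { intros y. unfold cyc at 1. rewrite Hlen.
    assert (y mod S d < S d)%nat by (apply Nat.mod_upper_bound; lia).
    unfold c0. rewrite nth_indep with (d' := f 0%nat) by (rewrite length_map, length_seq; auto).
    rewrite map_nth, seq_nth by auto. reflexivity. }
  assert (Hcj : cyc c (i + d) = cyc c j) by (rewrite <- Hd; unfold k; rewrite cyc_mod; auto).
  assert (Hci : cyc c i = nth i c 0%nat) by (unfold cyc; rewrite Nat.mod_small; auto).
  assert (Hcj' : cyc c j = nth j c 0%nat) by (unfold cyc; rewrite Nat.mod_small; auto).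
  assert (Hdist : cyc c i <> cyc c j).
  { rewrite Hci, Hcj'. intro E. apply Hij. eapply (proj1 (NoDup_nth c 0%nat)); eauto. }
  assert (Hin : (cyc c i < n)%nat /\ (cyc c j < n)%nat) by (split; apply Hlt, cyc_in; auto).
  assert (Hnp : ~ xy_parallel (L (cyc c i)) (L (cyc c j))) by (apply GP3; tauto).
  assert (Hnp' : ~ xy_parallel (L (cyc c j)) (L (cyc c i))) by (apply GP3; auto; tauto).
  destruct Pi as [p1 [E1 Q1]]. destruct Pj as [p2 [E2 Q2]].
  apply (edge_nf c Hk) in E1. apply (edge_nf c Hk) in E2.
  destruct E1 as [t [Ht Hp1]]. destruct E2 as [s [Hs Hp2]].
  assert (Ht' : t = meet_param (L (cyc c i)) (L (cyc c j))).
  { apply (mp_correct _ _ t s Hnp). congruence. }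
  assert (Hs' : s = meet_param (L (cyc c j)) (L (cyc c i))).
  { apply (mp_correct _ _ s t Hnp'). congruence. }
  rewrite <- Hd in Hs. fold k in Hs. rewrite (cyc_mod c Hk), (cyc_plus_mod c Hk), (cyc_S_mod c Hk) in Hs.
  rewrite Hcj in Hs.
  exists c0. split; [|split; [|split]].
  -
    split; [lia|split; [|split]].
    + unfold c0. apply NoDup_map_NoDup_ForallPairs; [|apply seq_NoDup].
      intros a b Ha Hb' E. apply in_seq in Ha, Hb'. unfold f, cyc in E.
      apply (proj1 (NoDup_nth c 0%nat) Hnd) in E; try (apply Nat.mod_upper_bound; auto).
      fold k in E.
      destruct (mod2 (i + a) k Hk ltac:(lia)) as [[A B]|[A B]]; rewrite B in E;
      destruct (mod2 (i + b) k Hk ltac:(lia)) as [[C D]|[C D]]; rewrite D in E; lia.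
    + intros x Hx. unfold c0 in Hx. apply in_map_iff in Hx. destruct Hx as [m [<- _]].
      apply Hlt, cyc_in; auto.
    + intros m Hm. rewrite Hlen in Hm.
      assert (Hl0 : length c0 <> 0%nat) by lia.
      rewrite (cyc_nxt c0 Hl0), !Hc0. rewrite (Nat.mod_small m) by lia.
      destruct (Nat.eq_dec m d) as [->|Hmd].
      * rewrite Nat.mod_same by lia. rewrite Nat.add_0_r, Hcj. exact Hb.
      * rewrite (Nat.mod_small (S m)) by lia.
        assert (Hx : ((i + m) mod k < k)%nat) by (apply Nat.mod_upper_bound; auto).
        specialize (Hbel _ Hx). rewrite (cyc_nxt c Hk), (cyc_S_mod c Hk), (cyc_mod c Hk) in Hbel.
        replace (i + S m)%nat with (S (i + m)) by lia. exact Hbel.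
  - intros x Hx. unfold c0 in Hx. apply in_map_iff in Hx. destruct Hx as [m [<- _]].
    apply cyc_in; auto.
  - lia.
  - apply sub_from_edges. intros m Hm. rewrite Hlen in Hm.
    exists ((i + m) mod k)%nat. split; [apply Nat.mod_upper_bound; auto|].
    assert (Hl0 : length c0 <> 0%nat) by lia.
    intros p Hp. apply (edge_mod c Hk). apply (edge_nf c0 Hl0) in Hp. apply (edge_nf c Hk).
    fold k. rewrite Hlen in Hp. rewrite !Hc0 in Hp. rewrite (Nat.mod_small m) in Hp by lia.
    replace (S d - 1)%nat with d in Hp by lia.
    destruct (Nat.eq_dec m 0) as [->|Hm0]; [|destruct (Nat.eq_dec m d) as [->|Hmd]].
    + rewrite (Nat.mod_small (S 0)) in Hp by lia.
      rewrite (Nat.mod_small (0 + d)) in Hp by lia. simpl in Hp.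
      rewrite !Nat.add_0_r in *. rewrite Hcj in Hp. rewrite Nat.add_1_r in Hp.
      revert Hp. apply seg_sub; [|apply in_rng_r]. rewrite <- Ht'. exact Ht.
    + rewrite Nat.mod_same in Hp by lia.
      replace ((d + d) mod S d)%nat with (d - 1)%nat in Hp
        by (replace (d + d)%nat with ((d - 1) + 1 * S d)%nat by lia;
            rewrite Nat.mod_add by lia; rewrite Nat.mod_small; lia).
      rewrite Nat.add_0_r in Hp. rewrite Hcj in *.
      replace (i + d + (k - 1))%nat with ((i + (d - 1)) + k)%nat in Hs by lia.
      rewrite (cyc_addk c) in Hs by auto.
      revert Hp. rewrite <- (cyc_addk c Hk (i + (d - 1))).
      replace (i + (d - 1) + length c)%nat with (i + d + (k - 1))%nat by (unfold k; lia).
      rewrite <- (cyc_addk c Hk (i + (d - 1))) in Hs.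
      replace (i + (d - 1) + length c)%nat with (i + d + (k - 1))%nat in Hs by (unfold k; lia).
      apply seg_sub; [apply in_rng_l|]. rewrite <- Hs'. exact Hs.
    + rewrite (Nat.mod_small (S m)) in Hp by lia.
      replace ((m + d) mod S d)%nat with (m - 1)%nat in Hp
        by (replace (m + d)%nat with ((m - 1) + 1 * S d)%nat by lia;
            rewrite Nat.mod_add by lia; rewrite Nat.mod_small; lia).
      replace (i + m + (k - 1))%nat with ((i + (m - 1)) + length c)%nat by (unfold k; lia).
      rewrite (cyc_addk c Hk). replace (S (i + m)) with (i + S m)%nat by lia. exact Hp.
Qed.

Lemma pedge_on L c i q : pedge L c i q -> exists p, on_line (L (cyc c i)) p /\ xy p = q.
Proof.
  intros [p [E Q]]. unfold edge in E. destruct E as [t [_ Hp]].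
  exists p; split; auto. exists t; auto.
Qed.

Lemma cyc_distinct n L c i j : is_cycle n L c -> (i < length c)%nat -> (j < length c)%nat ->
  i <> j -> cyc c i <> cyc c j /\ (cyc c i < n)%nat /\ (cyc c j < n)%nat.
Proof.
  intros [Hk3 [Hnd [Hlt _]]] Hi Hj Hij.
  assert (Hk : length c <> 0%nat) by lia.
  split; [|split; apply Hlt, cyc_in; auto].
  unfold cyc. rewrite !Nat.mod_small by auto.
  intro E. apply Hij. eapply (proj1 (NoDup_nth c 0%nat)); eauto.
Qed.

Lemma part1 n L : general_position n L ->
  forall c, is_cycle n L c -> self_crossing L c ->
     exists c0, is_cycle n L c0 /\ incl c0 c /\ (length c0 < length c)%nat /\
                sub_cycle L c0 c.
Proof.
  intros GP c Hc [i [j [Hi [Hj [Hij [H1 [H2 [q [Pi Pj]]]]]]]]].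
  destruct (cyc_distinct n L c i j Hc Hi Hj Hij) as [Hd [Hin1 Hin2]].
  destruct (pedge_on _ _ _ _ Pi) as [p1 [O1 X1]].
  destruct (pedge_on _ _ _ _ Pj) as [p2 [O2 X2]].
  destruct (Rtotal_order (pz p1) (pz p2)) as [Hlt|[Heq|Hgt]].
  - apply (arc n L c j i q GP Hc Hj Hi (not_eq_sym Hij) H2 H1 Pj Pi).
    exists p1, p2. destruct p1, p2; unfold xy in *; simpl in *.
    rewrite <- X2 in X1. injection X1 as A B. auto.
  - exfalso. destruct GP as [_ [GP2 _]].
    apply (GP2 _ _ Hin1 Hin2 Hd). exists p1; split; auto.
    replace p1 with p2; auto.
    destruct p1, p2; unfold xy in *; simpl in *. rewrite <- X2 in X1.
    injection X1 as A B. subst. reflexivity.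
  - apply (arc n L c i j q GP Hc Hi Hj Hij H1 H2 Pi Pj).
    exists p2, p1. destruct p1, p2; unfold xy in *; simpl in *.
    rewrite <- X2 in X1. injection X1 as A B. auto.
Qed.

Theorem mainTheorem4 (n : nat) (L : nat -> line) :
  general_position n L ->
  (forall c, is_cycle n L c -> self_crossing L c ->
     exists c0, is_cycle n L c0 /\ incl c0 c /\ (length c0 < length c)%nat /\
                sub_cycle L c0 c) /\
  (forall c, is_cycle n L c ->
     exists c0, is_cycle n L c0 /\ simple_cycle L c0 /\ sub_cycle L c0 c) /\
  (forall P : list pt3,
     (forall p, In p P -> exists i, (i < n)%nat /\ on_line (L i) p) ->
     (forall c, is_cycle n L c -> simple_cycle L c -> eliminates L P c) ->
     forall c, is_cycle n L c -> eliminates L P c).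
Proof.
  intros GP.
  assert (P1 := part1 n L GP).
  assert (P2 : forall c, is_cycle n L c ->
     exists c0, is_cycle n L c0 /\ simple_cycle L c0 /\ sub_cycle L c0 c).
  { assert (forall N c, (length c <= N)%nat -> is_cycle n L c ->
       exists c0, is_cycle n L c0 /\ simple_cycle L c0 /\ sub_cycle L c0 c).
    { induction N; intros c Hl Hc.
      - destruct Hc; lia.
      - destruct (classic (self_crossing L c)) as [Hs|Hs].
        + destruct (P1 c Hc Hs) as [c1 [Hc1 [_ [Hl1 Hs1]]]].
          destruct (IHN c1 ltac:(lia) Hc1) as [c0 [A [B C]]].
          exists c0; split; auto; split; auto. eapply sub_trans; eauto.
        + exists c; split; auto; split; auto. apply sub_refl. }
    intros c; apply (H (length c) c); auto. }
  split; auto; split; auto.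
  intros P _ HP c Hc.
  destruct (P2 c Hc) as [c0 [A [B [_ C]]]].
  destruct (HP c0 A B) as [i [p [Hi [Hin He]]]].
  destruct (C i Hi) as [j [Hj Hs]].
  exists j, p; auto.
Qed.
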